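(* Let $n\in\mathbb{N}_+$, $n\ge 3$, and \[ \phi_n(x):=(n+1)\int_0^1 t(1-t)^{n(1-x)}\frac{(1-t)^{nx}-t^{nx}}{1-2t}\,dt,\quad x\in[0,1]. \] Then $0\le\phi_n(x)\le \frac{4}{n}$ for all $x\in\left[0,1-\frac1n\right]$. *)

(* Defs.v *)
From HB Require Import structures.
From mathcomp Require Import all_boot all_order all_algebra.
From mathcomp Require Import all_classical all_reals all_analysis.
Set Implicit Arguments. Unset Strict Implicit. Unset Printing Implicit Defensive.
Import Order.TTheory GRing.Theory Num.Theory.
Local Open Scope classical_set_scope.
Local Open Scope ring_scope.

(* The integrand has a removable singularity at t = 1/2 (where the division
   by zero gives 0 in MathComp); this single point is Lebesgue-negligible. *)
Definition phi_integrand {R : realType} (n : nat) (x t : R) : R :=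
  t * ((1 - t) `^ (n%:R * (1 - x))) *
  (((1 - t) `^ (n%:R * x) - t `^ (n%:R * x)) / (1 - 2 * t)).

Definition phi {R : realType} (n : nat) (x : R) : R :=
  (n.+1)%:R * Rintegral lebesgue_measure `[0, 1] (phi_integrand n x).

(* Main.v *)
From HB Require Import structures.
From mathcomp Require Import all_boot all_order all_algebra.
From mathcomp Require Import all_classical all_reals all_analysis.
From mathcomp Require Import ring lra zify measurable_realfun.
From Stdlib Require Import Lia.
Require Import Defs.
Import Order.TTheory GRing.Theory Num.Theory.
Local Open Scope classical_set_scope.
Local Open Scope ring_scope.

Lemma measurable_inv (R: realType) : measurable_fun [set: R] (fun x : R => x^-1).
Proof.
have -> : [set: R] = ([set x | x != 0] `|` [set 0])%classic.
  apply/seteqP; split => x //= _; case: (eqVneq x 0) => [->|]; [right|left] => //.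
apply/measurable_funU; [exact (@open_measurable R _ (@open_neq R 0)) | exact: measurable_set1 |].
split; last exact: measurable_fun_set1.
apply: open_continuous_measurable_fun; first exact: open_neq.
move=> x; rewrite inE /= => hx; exact: inv_continuous.
Qed.

Lemma measurable_phi (R : realType) n (x : R) :
  measurable_fun [set: R] (phi_integrand n x).
Proof.
have mB : measurable_fun [set: R] (fun t : R => 1 - t).
  by apply: measurable_funB => //; exact: measurable_cst.
rewrite /phi_integrand.
apply: measurable_funM; [apply: measurable_funM|apply: measurable_funM].
- exact: measurable_id.
- exact: (measurableT_comp (measurable_powR _) mB).
- apply: measurable_funB.
  + exact: (measurableT_comp (measurable_powR _) mB).
  + exact: (measurable_powR _).
- apply: (measurableT_comp (measurable_inv R)).
  apply: measurable_funB; first exact: measurable_cst.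
  apply: measurable_funM; [exact: measurable_cst|exact: measurable_id].
Qed.

Lemma Rintegral_sum_seq (R : realType) (D : set R) (I : Type) (s : seq I)
  (F : I -> R -> R) : measurable D ->
  (forall i, lebesgue_measure.-integrable D (EFin \o F i)) ->
  Rintegral lebesgue_measure D (fun t => \sum_(i <- s) F i t) =
  \sum_(i <- s) Rintegral lebesgue_measure D (F i).
Proof.
move=> mD iF; elim: s => [|i s IH].
  rewrite big_nil /Rintegral; under eq_integral do rewrite big_nil; by rewrite integral0.
rewrite big_cons -IH; under eq_Rintegral do rewrite big_cons.
rewrite RintegralD //.
have -> : (EFin \o (fun t => \sum_(j <- s) F j t)) = (fun t => \sum_(j <- s) (F j t)%:E).
  by apply: funext => t; rewrite /= sumEFin.
by apply: integrable_sum => // j _; exact: iF.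
Qed.
Lemma fact_mid (j k : nat) : (j.+2`! * k.+2`! <= 2 * (j + k).+2`!)%N.
Proof.
elim: j => [|j IH]; first by rewrite add0n.
rewrite factS -mulnA.
apply: (leq_trans (leq_mul (leqnn j.+3) IH)).
have -> : ((j.+1 + k).+2 = (j+k).+3)%N by lia.
rewrite (factS (j+k).+2) [X in (_ <= X)%N]mulnCA.
apply: leq_mul => //; lia.
Qed.

Lemma sum_bound n : (3 <= n)%N ->
  (n * \sum_(i < n.-1) ((i.+1)`! * (n.-1 - i)`!) <= 4 * n`!)%N.
Proof.
case: n => [|[|[|m]]] // _.
rewrite /= big_ord_recl big_ord_recr /=.
have Hmid : (\sum_(i < m) (bump 0 (widen_ord (leqnSn m) i)).+1`! * (m.+2 - bump 0 (widen_ord (leqnSn m) i))`!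
   <= \sum_(i < m) 2 * m.+1`!)%N.
  apply: leq_sum => i _.
  rewrite /bump /= add1n.
  have hi := ltn_ord i.
  have -> : (m.+2 - i.+1 = (m.-1 - i).+2)%N by lia.
  have := fact_mid i (m.-1 - i).
  by have -> : ((i + (m.-1 - i)).+2 = m.+1)%N by lia.
rewrite sum_nat_const card_ord in Hmid.
move: Hmid.
set M := (\sum_(i < m) _)%N.
rewrite /bump /= subn0.
have -> : (m.+2 - m.+1 = 1)%N by lia.
rewrite !factS fact0.
set F := m`!.
move=> H; nia.
Qed.
Lemma sign_pow (R : realType) (p u t : R) : 0 <= p -> 0 <= u -> 0 <= t ->
  0 <= (u `^ p - t `^ p) / (u - t).
Proof.
move=> p0 u0 t0.
case: (leP u t) => h.
- apply: mulr_le0.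
    by rewrite subr_le0; apply: ge0_ler_powR => //; rewrite ?nnegrE.
  by rewrite invr_le0 subr_le0.
- apply: divr_ge0; rewrite subr_ge0 //; last exact: ltW.
  by apply: ge0_ler_powR => //; rewrite ?nnegrE // ltW.
Qed.

Lemma pointwise (R : realType) n (x t : R) : (3 <= n)%N -> 0 <= x ->
  x <= 1 - n%:R^-1 -> 0 <= t -> t <= 1 ->
  0 <= phi_integrand n x t /\
  phi_integrand n x t <= \sum_(i < n.-1) XMonemX i.+1 (n.-1 - i) t.
Proof.
move=> hn x0 x1 t0 t1.
have hn0 : (0 < n)%N by lia.
have nR0 : 0 < n%:R :> R by rewrite ltr0n.
set u := 1 - t; set a := n%:R * x; set c := n%:R * (1 - x) - 1.
have u0 : 0 <= u by rewrite /u subr_ge0.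
have a0 : 0 <= a by rewrite /a mulr_ge0 // ltW.
have c0 : 0 <= c.
  rewrite /c subr_ge0.
  have h1 : n%:R^-1 <= 1 - x by lra.
  have := ler_wpM2l (ltW nR0) h1; rewrite mulfV ?gt_eqF //.
have hn1 : n%:R = (n.-1)%:R + 1 :> R by rewrite natr1 prednK.
have hca : c + a = (n.-1)%:R.
  by rewrite /c /a hn1; ring.
have hne : (c + a == 0) = false.
  by rewrite hca pnatr_eq0; apply/negbTE; lia.
have hu : u `^ (n%:R * (1 - x)) = u `^ c * u.
  have -> : n%:R * (1 - x) = c + 1 by rewrite /c subrK.
  rewrite powRD ?powRr1 //; apply/implyP => /eqP h; exfalso; lra.
have hA : u `^ c * u `^ a = u ^+ n.-1.
  by rewrite -powRD ?hne // hca powR_mulrn.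
have hB : t `^ c * t `^ a = t ^+ n.-1.
  by rewrite -powRD ?hne // hca powR_mulrn.
have hsum : \sum_(i < n.-1) XMonemX i.+1 (n.-1 - i) t =
   t * u * \sum_(i < n.-1) u ^+ (n.-1.-1 - i) * t ^+ i.
  rewrite big_distrr; apply: eq_bigr => i _.
  have hi := ltn_ord i.
  rewrite /XMonemX.
have -> : unstable.onem t = u by [].
  have -> : (n.-1 - i = (n.-1.-1 - i).+1)%N by lia.
  rewrite !exprS /=; ring.
have hsum0 : 0 <= \sum_(i < n.-1) XMonemX i.+1 (n.-1 - i) t.
  apply: sumr_ge0 => i _; apply: XMonemX_ge0; rewrite in_itv /=; apply/andP; split => //.
rewrite /phi_integrand -/u -/a hu.
have h2 : 1 - 2 * t = u - t by rewrite /u; ring.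
rewrite h2.
case: (eqVneq (u - t) 0) => hut.
  by rewrite hut invr0 !mulr0.
split.
  apply: mulr_ge0; first by apply: mulr_ge0 => //; apply: mulr_ge0 => //; exact: powR_ge0.
  exact: sign_pow.
have hS : \sum_(i < n.-1) u ^+ (n.-1.-1 - i) * t ^+ i =
   (u `^ c * u `^ a - t `^ c * t `^ a) / (u - t).
  rewrite hA hB subrXX mulrC mulrA mulVf // mul1r //.
rewrite hsum hS -subr_ge0.
have -> : t * u * ((u `^ c * u `^ a - t `^ c * t `^ a) / (u - t)) -
  t * (u `^ c * u) * ((u `^ a - t `^ a) / (u - t)) =
  t * u * t `^ a * ((u `^ c - t `^ c) / (u - t)) by ring.
apply: mulr_ge0; last exact: sign_pow.
by apply: mulr_ge0; [apply: mulr_ge0|exact: powR_ge0].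
Qed.

Theorem lemma2p5 (R : realType) (n : nat) (hn : (3 <= n)%N) (x : R)
  (hx0 : 0 <= x) (hx1 : x <= 1 - n%:R^-1) :
  0 <= phi n x /\ phi n x <= 4 / n%:R.
Proof.
have hn0 : (0 < n)%N by lia.
have nR0 : 0 < n%:R :> R by rewrite ltr0n.
rewrite /phi.
split.
  apply: mulr_ge0 => //; apply: Rintegral_ge0 => t /=; rewrite in_itv /= => /andP[t0 t1].
  by have [] := @pointwise R n x t hn hx0 hx1 t0 t1.
set Q := fun t : R => \sum_(i < n.-1) XMonemX i.+1 (n.-1 - i) t.
have m01 : measurable (`[0, 1] : set R) by [].
have iQ : lebesgue_measure.-integrable `[0, 1] (EFin \o Q).
  have -> : EFin \o Q = (fun t => \sum_(i < n.-1) (XMonemX i.+1 (n.-1 - i) t)%:E).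
    by apply: funext => t; rewrite /= sumEFin.
  by apply: integrable_sum => // i _; exact: integrable_XMonemX.
have mf : measurable_fun (`[0, 1] : set R) (phi_integrand n x).
  by apply: (measurable_funS measurableT) => //; exact: measurable_phi.
have iF : lebesgue_measure.-integrable `[0, 1] (EFin \o phi_integrand n x).
  apply: (le_integrable _ _ _ iQ) => //.
    by apply/measurable_EFinP.
  move=> t /=; rewrite in_itv /= => /andP[t0 t1].
  have [h1 h2] := @pointwise R n x t hn hx0 hx1 t0 t1.
  rewrite /= lee_fin !ger0_norm //; exact: le_trans h1 h2.
have hle : Rintegral lebesgue_measure `[0, 1] (phi_integrand n x) <=
           Rintegral lebesgue_measure `[0, 1] Q.
  apply: le_Rintegral => // t /=; rewrite in_itv /= => /andP[t0 t1].
  by have [] := @pointwise R n x t hn hx0 hx1 t0 t1.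
have hQ : Rintegral lebesgue_measure `[0, 1] Q =
   (\sum_(i < n.-1) ((i.+1)`! * (n.-1 - i)`!)%N)%:R / (n.+1)`!%:R.
  rewrite /Q Rintegral_sum_seq //; last by move=> i; exact: integrable_XMonemX.
  rewrite natr_sum mulr_suml; apply: eq_bigr => i _.
  have hi := ltn_ord i.
  transitivity (beta_fun (R:=R) i.+2 (n.-1 - i).+1); first by rewrite Rintegral_mkcond.
  rewrite beta_fun_fact.
  by have -> : ((i.+1 + (n.-1 - i)).+1 = n.+1)%N by lia.
apply: (le_trans (ler_wpM2l (ler0n _ _) hle)).
rewrite hQ factS natrM invfM mulrCA [n.+1%:R * _]mulrA mulfV ?mul1r; last by rewrite pnatr_eq0.
have F0 : 0 < n`!%:R :> R by rewrite ltr0n fact_gt0.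
rewrite ler_pdivrMr // mulrAC ler_pdivlMr //.
rewrite -natrM -(natrM _ 4) ler_nat mulnC.
exact: sum_bound.
Qed.
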